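(* Let $\mathcal{C}$ be any class of connected graphs, and for each positive integer $n$ let $\mathcal{C}_n$ denote the set of isomorphism classes of $n$-vertex graphs in $\mathcal{C}$. Then $\mathcal{C}$ has local complexity at most $\log(|\mathcal{C}_n|)+O(\log n)$. In particular, if $\mathcal{C}$ is tiny (i.e., there is a constant $c>0$ with $|\mathcal{C}_n|\le c^n$ for all $n$), then the local complexity of $\mathcal{C}$ is $O(n)$.
   Context: All graphs are finite, simple, undirected and connected; logarithms are binary. The vertices of an $n$-vertex graph $G$ carry distinct identifiers from $\{1,\dots,\mathrm{poly}(n)\}$. A proof for $G$ is a map $P:V(G)\to\{0,1\}^*$ (it may depend on the identifiers); its size is the maximum length of a certificate $P(v)$. A prover for a class $\mathcal{G}$ maps each $G\in\mathcal{G}$ to a proof for $G$. A verifier $\mathcal{A}$ maps $(G,P,v)$ to $\{0,1\}$ ($v$ accepts if the output is 1); it is local if the output of $v$ depends only on the identifiers and certificates of the vertices in the closed neighborhood $N[v]$ (optionally also on the graph induced by $N[v]$). A proof labeling scheme for $\mathcal{G}$ is a prover–local verifier pair such that: if $G\in\mathcal{G}$, every vertex accepts the prover's proof; if $G\notin\mathcal{G}$, for every proof some vertex rejects. Its complexity is the maximum size of a proof assigned by the prover to an $n$-vertex graph of $\mathcal{G}$, as a function of $n$; the local complexity of $\mathcal{G}$ is the minimum complexity of a proof labeling scheme for $\mathcal{G}$. *)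

(* Defs.v *)
From mathcomp Require Import all_boot all_fingroup.
Set Implicit Arguments. Unset Strict Implicit. Unset Printing Implicit Defensive.

Definition edges (n : nat) := {set 'I_n * 'I_n}.

Definition is_graph n (E : edges n) : bool :=
  [forall u, forall v, ((u, v) \in E) == ((v, u) \in E)] &&
  [forall u, (u, u) \notin E].

Definition connected_graph n (E : edges n) : bool :=
  [forall u, forall v, connect (fun x y => (x, y) \in E) u v].

Definition good_graph n (E : edges n) : bool :=
  [&& 0 < n, is_graph E & connected_graph E].

Definition gclass := forall n, edges n -> bool.

Definition relabel n (s : {perm 'I_n}) (E : edges n) : edges n :=
  [set (s p.1, s p.2) | p in E].

Definition iso_closed (C : gclass) : Prop :=
  forall n (E : edges n) (s : {perm 'I_n}), C n (relabel s E) = C n E.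

Definition class_of_connected (C : gclass) : Prop :=
  forall n (E : edges n), C n E -> good_graph E.

Definition num_iso_classes (C : gclass) n : nat :=
  #|[set [set relabel s E | s : {perm 'I_n}] | E in [set E : edges n | C n E]]|.

Definition valid_ids (k n : nat) (id : 'I_n -> nat) : bool :=
  [forall u, forall v, (id u == id v) ==> (u == v)] &&
  [forall v, (0 < id v <= n ^ k)].

Definition certif := seq bool.
Definition proofT n := 'I_n -> certif.

Definition proverT := forall n, edges n -> ('I_n -> nat) -> proofT n.
Definition verifierT := forall n, edges n -> ('I_n -> nat) -> proofT n -> 'I_n -> bool.

Definition nbhd n (E : edges n) (v : 'I_n) : {set 'I_n} :=
  v |: [set u | (v, u) \in E].

(* what v sees: certificates of N[v] indexed by identifiers, and the graph
   induced on N[v] (by identifiers) *)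
Definition view_cert n (E : edges n) (id : 'I_n -> nat) (P : proofT n) (v : 'I_n)
  (x : nat) : option certif :=
  if [pick u in nbhd E v | id u == x] is Some u then Some (P u) else None.

Definition view_adj n (E : edges n) (id : 'I_n -> nat) (v : 'I_n) (x y : nat) : bool :=
  [exists u in nbhd E v, exists w in nbhd E v,
     [&& id u == x, id w == y & (u, w) \in E]].

Definition same_view n n' (E : edges n) (E' : edges n') (id : 'I_n -> nat)
  (id' : 'I_n' -> nat) (P : proofT n) (P' : proofT n') (v : 'I_n) (v' : 'I_n') : Prop :=
  [/\ id v = id' v',
      forall x, view_cert E id P v x = view_cert E' id' P' v' x &
      forall x y, view_adj E id v x y = view_adj E' id' v' x y].

Definition local (k : nat) (A : verifierT) : Prop :=
  forall n n' (E : edges n) (E' : edges n') id id' (P : proofT n) (P' : proofT n')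
    (v : 'I_n) (v' : 'I_n'),
    good_graph E -> good_graph E' -> valid_ids k id -> valid_ids k id' ->
    same_view E E' id id' P P' v v' -> A n E id P v = A n' E' id' P' v'.

Definition is_PLS (k : nat) (C : gclass) (prover : proverT) (A : verifierT) : Prop :=
  [/\ local k A,
      (forall n (E : edges n) id, C n E -> valid_ids k id ->
         forall v, A n E id (prover n E id) v) &
      (forall n (E : edges n) id, good_graph E -> valid_ids k id -> ~~ C n E ->
         forall P : proofT n, exists v, ~~ A n E id P v)].

Definition complexity_le (k : nat) (C : gclass) (prover : proverT) (f : nat -> nat) : Prop :=
  forall n (E : edges n) id, C n E -> valid_ids k id ->
    forall v, size (prover n E id v) <= f n.

Definition local_complexity_le (k : nat) (C : gclass) (f : nat -> nat) : Prop :=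
  exists prover A, is_PLS k C prover A /\ complexity_le k C prover f.

Definition tiny (C : gclass) : Prop :=
  exists c : nat, forall n, 0 < n -> num_iso_classes C n <= c ^ n.

(* Main.v *)
Require Import Defs.
From mathcomp Require Import all_boot all_fingroup.
From mathcomp Require Import zify.
From Stdlib Require Import ClassicalDescription FunctionalExtensionality IndefiniteDescription.
Set Implicit Arguments. Unset Strict Implicit. Unset Printing Implicit Defensive.

Fixpoint bits (L m : nat) : seq bool :=
  if L is L'.+1 then odd m :: bits L' m./2 else [::].
Fixpoint bval (s : seq bool) : nat :=
  if s is b :: s' then b + (bval s').*2 else 0.

Lemma size_bits L m : size (bits L m) = L.
Proof. by elim: L m => //= L IH m; rewrite IH. Qed.

Lemma bvalK L m : m < 2 ^ L -> bval (bits L m) = m.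
Proof.
elim: L m => [|L IH] m /=; first by case: m.
move=> hm; rewrite IH; first exact: odd_double_half.
rewrite expnS in hm; rewrite -ltn_double -!mul2n.
have := odd_double_half m; rewrite -mul2n; lia.
Qed.

Definition blen m := up_log 2 m.+1.
Lemma blenP m : m < 2 ^ blen m.
Proof. exact: up_logP. Qed.
Lemma blen_le m e : m < 2 ^ e -> blen m <= e.
Proof. by move=> h; apply: up_log_min. Qed.

Definition sd m := nseq (blen m) true ++ false :: bits (blen m) m.
Lemma size_sd m : size (sd m) = (blen m).*2.+1.
Proof. by rewrite /sd size_cat size_nseq /= size_bits addnS addnn. Qed.

Lemma nseq_inj L L' t t' :
  nseq L true ++ false :: t = nseq L' true ++ false :: t' -> L = L' /\ t = t'.
Proof.
elim: L L' => [|L IH] [|L'] /=; try by case.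
by case=> /IH [-> ->].
Qed.

Lemma sd_cat_inj a b s t : sd a ++ s = sd b ++ t -> a = b /\ s = t.
Proof.
rewrite /sd -!catA /= => /nseq_inj [hL].
move=> /eqP; rewrite eqseq_cat ?size_bits // => /andP [/eqP hb /eqP ->].
split=> //.
by move: (congr1 bval hb); rewrite (bvalK (blenP a)) (bvalK (blenP b)).
Qed.

Definition enc (t : nat * nat * nat * nat) : seq bool :=
  let: (i, n, l, r) := t in sd n ++ sd l ++ sd r ++ bits (blen i) i.

Lemma enc_inj : injective enc.
Proof.
move=> [[[i n] l] r] [[[i' n'] l'] r'] /=.
move=> /sd_cat_inj [-> /sd_cat_inj [-> /sd_cat_inj [-> h]]].
have hs : blen i = blen i' by rewrite -(size_bits (blen i) i) h size_bits.
by move: (congr1 bval h); rewrite (bvalK (blenP i)) (bvalK (blenP i')) => ->.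
Qed.

Lemma size_enc i n l r : size (enc (i, n, l, r)) =
  (blen n).*2.+1 + (blen l).*2.+1 + (blen r).*2.+1 + blen i.
Proof. by rewrite /enc size_cat size_sd size_cat size_sd size_cat size_sd size_bits !addnA. Qed.

Definition gclasses (C : gclass) n : {set {set edges n}} :=
  [set [set relabel s E | s : {perm 'I_n}] | E in [set E : edges n | C n E]].

Definition rep (C : gclass) n i : edges n :=
  if [pick E in nth set0 (enum (gclasses C n)) i] is Some E then E else set0.

Definition hedge n (H : edges n) (a b : nat) : bool :=
  [exists x : 'I_n, exists y : 'I_n, [&& nat_of_ord x == a, nat_of_ord y == b & (x, y) \in H]].

Definition VP (C : gclass) (idv : nat) (cert : nat -> option certif) (adj : nat -> nat -> bool) : Prop :=
  exists i n l r,
    cert idv = Some (enc (i, n, l, r)) /\ C n (rep C n i) /\ l < n /\ (l = 0 -> idv = r) /\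
    (forall x, adj idv x -> exists l', cert x = Some (enc (i, n, l', r)) /\ hedge (rep C n i) l l') /\
    (forall x y l', adj idv x -> adj idv y -> cert x = Some (enc (i, n, l', r)) ->
        cert y = Some (enc (i, n, l', r)) -> x = y) /\
    (forall m, hedge (rep C n i) l m -> exists x, adj idv x /\ cert x = Some (enc (i, n, m, r))).

Definition GP (C : gclass) N (E : edges N) (id : 'I_N -> nat) (P : proofT N) (v : 'I_N) : Prop :=
  exists i n l r,
    P v = enc (i, n, l, r) /\ C n (rep C n i) /\ l < n /\ (l = 0 -> id v = r) /\
    (forall w, (v, w) \in E -> exists l', P w = enc (i, n, l', r) /\ hedge (rep C n i) l l') /\
    (forall w w' l', (v, w) \in E -> (v, w') \in E -> P w = enc (i, n, l', r) ->
        P w' = enc (i, n, l', r) -> w = w') /\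
    (forall m, hedge (rep C n i) l m -> exists w, (v, w) \in E /\ P w = enc (i, n, m, r)).

Definition verif (C : gclass) : verifierT := fun n E id P v =>
  if excluded_middle_informative (VP C (id v) (view_cert E id P v) (view_adj E id v))
  then true else false.

Lemma verif_local C k : local k (verif C).
Proof.
move=> n n' E E' id id' P P' v v' _ _ _ _ [h1 h2 h3].
rewrite /verif h1.
have -> : view_cert E id P v = view_cert E' id' P' v' by apply: functional_extensionality.
have -> : view_adj E id v = view_adj E' id' v'.
  by apply: functional_extensionality => x; apply: functional_extensionality.
by [].
Qed.

Section View.
Variables (k N : nat) (E : edges N) (id : 'I_N -> nat) (P : proofT N).
Hypothesis vid : valid_ids k id.

Lemma id_inj : injective id.
Proof.
move: vid => /andP [/forallP h _] u v huv.
by move: (h u) => /forallP /(_ v) /implyP /(_ (introT eqP huv)) /eqP.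
Qed.

Lemma vcert v w : w \in nbhd E v -> view_cert E id P v (id w) = Some (P w).
Proof.
move=> hw; rewrite /view_cert.
case: pickP => [u /andP [_ /eqP /id_inj -> //]|].
by move=> /(_ w); rewrite hw eqxx.
Qed.

Lemma nbhd_edge v w : (v, w) \in E -> w \in nbhd E v.
Proof. by move=> h; rewrite /nbhd in_setU1 inE h orbT. Qed.

Lemma vadj v x : view_adj E id v (id v) x -> exists w, (v, w) \in E /\ x = id w.
Proof.
move=> /existsP [u /andP [hu /existsP [w /andP [hw /and3P [/eqP /id_inj -> /eqP <- h]]]]].
by exists w.
Qed.

Lemma vadj' v w : (v, w) \in E -> view_adj E id v (id v) (id w).
Proof.
move=> h; apply/existsP; exists v; rewrite /nbhd setU11 /=.
by apply/existsP; exists w; rewrite nbhd_edge //= !eqxx h.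
Qed.

Lemma VP_GP C v : VP C (id v) (view_cert E id P v) (view_adj E id v) -> GP C E id P v.
Proof.
move=> [i [n [l [r [h1 [h2 [h3 [h4 [h5 [h6 h7]]]]]]]]]].
exists i, n, l, r; split.
  by move: h1; rewrite vcert ?setU11 // => [[]].
do 3 (split=> //).
split.
  move=> w hw; have [l' [hc hh]] := h5 _ (vadj' hw).
  by exists l'; move: hc; rewrite vcert ?nbhd_edge // => [[]].
split.
  move=> w w' l' hw hw' e1 e2; apply: id_inj; apply: (h6 _ _ l'); try exact: vadj'.
    by rewrite vcert ?nbhd_edge // e1.
  by rewrite vcert ?nbhd_edge // e2.
move=> m /h7 [x [/vadj [w [hw ->]] hc]]; exists w; split=> //.
by move: hc; rewrite vcert ?nbhd_edge // => [[]].
Qed.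

Lemma GP_VP C v : GP C E id P v -> VP C (id v) (view_cert E id P v) (view_adj E id v).
Proof.
move=> [i [n [l [r [h1 [h2 [h3 [h4 [h5 [h6 h7]]]]]]]]]].
exists i, n, l, r; split.
  by rewrite vcert ?setU11 // h1.
do 3 (split=> //).
split.
  move=> x /vadj [w [hw ->]]; have [l' [hc hh]] := h5 _ hw.
  by exists l'; rewrite vcert ?nbhd_edge // hc.
split.
  move=> x y l' /vadj [w [hw ->]] /vadj [w' [hw' ->]].
  rewrite !vcert ?nbhd_edge // => [[e1] [e2]].
  by rewrite (h6 w w' l').
move=> m /h7 [w [hw hc]]; exists (id w); split; first exact: vadj'.
by rewrite vcert ?nbhd_edge // hc.
Qed.

End View.

Definition idx (C : gclass) N (E : edges N) :=
  index [set relabel s E | s : {perm 'I_N}] (enum (gclasses C N)).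

Definition rootof N (id : 'I_N -> nat) (s : {perm 'I_N}) :=
  if [pick u : 'I_N | nat_of_ord (s u) == 0] is Some u then id u else 0.

Definition prover (C : gclass) : proverT := fun N E id v =>
  if [pick s : {perm 'I_N} | rep C N (idx C E) == relabel s E] is Some s
  then enc (idx C E, N, nat_of_ord (s v), rootof id s)
  else [::].

Lemma mem_relabel N (s : {perm 'I_N}) (E : edges N) a b :
  ((s a, s b) \in relabel s E) = ((a, b) \in E).
Proof.
apply/imsetP/idP => [[[p1 p2] hp [/perm_inj -> /perm_inj ->]] //|h].
by exists (a, b).
Qed.

Lemma rep_in (C : gclass) N (E : edges N) : C N E ->
  exists s : {perm 'I_N}, rep C N (idx C E) = relabel s E.
Proof.
move=> hC.
have hK : [set relabel s E | s : {perm 'I_N}] \in enum (gclasses C N).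
  by rewrite mem_enum; apply: imset_f; rewrite inE.
rewrite /rep /idx (nth_index _ hK).
case: pickP => [E' /imsetP [s _ ->] | /(_ (relabel 1 E))]; first by exists s.
by rewrite (imset_f (fun s : {perm 'I_N} => relabel s E)).
Qed.

Lemma idx_lt (C : gclass) N (E : edges N) : C N E -> idx C E < num_iso_classes C N.
Proof.
move=> hC; rewrite /num_iso_classes /idx cardE index_mem mem_enum.
by apply: imset_f; rewrite inE.
Qed.

Lemma prover_spec (C : gclass) N (E : edges N) id : C N E ->
  exists s : {perm 'I_N}, rep C N (idx C E) = relabel s E /\
    forall u, @prover C N E id u = enc (idx C E, N, nat_of_ord (s u), rootof id s).
Proof.
move=> /rep_in [s0 h0]; rewrite /prover.
case: pickP => [s /eqP hs | /(_ s0)]; last by rewrite h0 eqxx.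
by exists s.
Qed.

Lemma completeness (C : gclass) k N (E : edges N) id : iso_closed C -> C N E -> valid_ids k id ->
  forall v, @verif C N E id (@prover C N E id) v.
Proof.
move=> iso hC vid v; rewrite /verif; case: excluded_middle_informative => // [] [].
apply: (GP_VP vid).
have [s [hs hP]] := prover_spec id hC.
exists (idx C E), N, (nat_of_ord (s v)), (rootof id s).
split; first exact: hP.
split; first by rewrite hs iso.
split; first exact: ltn_ord.
split.
  rewrite /rootof; case: pickP => [u /eqP hu hv|/(_ v) /eqP //].
  have : s u = s v by apply: val_inj; rewrite /= hu hv.
  by move=> /perm_inj ->.
split.
  move=> w hw; exists (nat_of_ord (s w)); split; first exact: hP.
  by apply/existsP; exists (s v); apply/existsP; exists (s w); rewrite !eqxx hs mem_relabel.
split.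
  move=> w w' l' hw hw'; rewrite !hP => /enc_inj [<-] /enc_inj [] /val_inj /perm_inj.
  by [].
move=> m /existsP [x /existsP [y /and3P [/eqP hx /eqP hy]]].
have -> : x = s v by apply: val_inj.
rewrite hs -{1}(permKV s y) mem_relabel => hE.
by exists (s^-1 y)%g; split=> //; rewrite hP permKV hy.
Qed.


Lemma hedgeE n (H : edges n) (x y : 'I_n) : hedge H x y = ((x, y) \in H).
Proof.
apply/existsP/idP => [[x' /existsP [y' /and3P [/eqP hx /eqP hy h]]]|h].
  have -> : x = x' by apply: val_inj.
  by have -> : y = y' by apply: val_inj.
by exists x; apply/existsP; exists y; rewrite !eqxx h.
Qed.

Lemma cover N n (E : edges N) (H : edges n) (f : 'I_N -> nat) (id : 'I_N -> nat) r :
  0 < N -> is_graph E -> is_graph H -> connected_graph H -> injective id ->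
  (forall u, f u < n) -> (forall u, f u = 0 -> id u = r) ->
  (forall u w, (u, w) \in E -> hedge H (f u) (f w)) ->
  (forall u w w', (u, w) \in E -> (u, w') \in E -> f w = f w' -> w = w') ->
  (forall u m, hedge H (f u) m -> exists w, (u, w) \in E /\ f w = m) ->
  exists g : 'I_N -> 'I_n, [/\ injective g, N = n &
     forall u w, ((u, w) \in E) = ((g u, g w) \in H)].
Proof.
move=> hN /andP [/forallP symE _] /andP [/forallP symH _] cH idi flt froot c5 c6 c7.
pose v0 : 'I_N := Ordinal hN.
case: n H f flt froot c5 c6 c7 symH cH => [|n] H f flt; first by have := flt v0.
move=> froot c5 c6 c7 symH cH.
pose g u : 'I_n.+1 := inord (f u).
have fg u : f u = g u by rewrite inordK.
have c5' u w : (u, w) \in E -> (g u, g w) \in H by move=> /c5; rewrite !fg hedgeE.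
have c7' u y : (g u, y) \in H -> exists w, (u, w) \in E /\ g w = y.
  rewrite -hedgeE -fg => /c7 [w [hw hf]]; exists w; split=> //.
  by apply: val_inj; rewrite /= -fg.
have c6' u w w' : (u, w) \in E -> (u, w') \in E -> g w = g w' -> w = w'.
  by move=> h1 h2 h3; apply: (c6 u) => //; rewrite !fg h3.
have sE u w : ((u, w) \in E) = ((w, u) \in E) by apply/eqP; move: (symE u) => /forallP.
have sH x y : ((x, y) \in H) = ((y, x) \in H) by apply/eqP; move: (symH x) => /forallP.
pose fib y := [set u | g u == y].
have step1 x y : (x, y) \in H -> #|fib x| <= #|fib y|.
  move=> hxy.
  pose pk u := odflt u [pick w | ((u, w) \in E) && (g w == y)].
  have pks u : g u = x -> (u, pk u) \in E /\ g (pk u) = y.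
    move=> hu; rewrite /pk; case: pickP => [w /andP [h1 /eqP h2] //|].
    have := c7' u y; rewrite hu => /(_ hxy) [w [h1 h2]].
    by move=> /(_ w); rewrite h1 h2 eqxx.
  rewrite -(card_in_imset (f := pk)).
    apply: subset_leq_card; apply/subsetP => w /imsetP [u].
    by rewrite inE => /eqP /pks [_ h] ->; rewrite inE h.
  move=> u u'; rewrite !inE => /eqP hu /eqP hu' e.
  have [h1 _] := pks u hu; have [h2 _] := pks u' hu'.
  apply: (c6' (pk u)); first by rewrite sE.
    by rewrite sE e.
  by rewrite hu hu'.
have step2 x y : (x, y) \in H -> #|fib x| = #|fib y|.
  by move=> h; apply/eqP; rewrite eqn_leq !step1 // -sH.
have step3 y : #|fib y| = #|fib ord0|.
  have hc : connect (fun x y => (x, y) \in H) ord0 y.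
    by move: cH => /forallP /(_ ord0) /forallP /(_ y).
  have hcl : closed (fun x y => (x, y) \in H) [pred z | #|fib z| == #|fib ord0|].
    by move=> a b /step2; rewrite !inE => ->.
  have := closed_connect hcl hc.
  by rewrite !inE eqxx => /esym /eqP.
have step4 : #|fib ord0| <= 1.
  apply/card_le1_eqP => u u'; rewrite !inE => /eqP hu /eqP hu'.
  by apply: idi; rewrite (froot u) ?(froot u') // fg ?hu ?hu'.
have ginj : injective g.
  move=> u u' e; have := step4; rewrite -(step3 (g u)) => /card_le1_eqP h.
  by apply: (h u' u); rewrite inE ?e.
have ne y : exists u, g u = y.
  have : 0 < #|fib y| by rewrite step3 -(step3 (g v0)) card_gt0; apply/set0Pn; exists v0; rewrite inE.
  by rewrite card_gt0 => /set0Pn [u]; rewrite inE => /eqP; exists u.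
exists g; split=> //.
  apply/eqP; rewrite eqn_leq; apply/andP; split.
    by have := leq_card g ginj; rewrite !card_ord.
  pose h y := odflt v0 [pick u | g u == y].
  have hK : cancel h g.
    move=> y; rewrite /h; case: pickP => [u /eqP //|].
    by have [u hu] := ne y; move=> /(_ u); rewrite hu eqxx.
  by have := leq_card h (can_inj hK); rewrite !card_ord.
move=> u w; apply/idP/idP; first exact: c5'.
by move=> /c7' [w' [hw' /ginj e]]; rewrite -e.
Qed.


Lemma iso_transfer (C : gclass) N (E H : edges N) (g : 'I_N -> 'I_N) :
  iso_closed C -> injective g -> (forall u w, ((u, w) \in E) = ((g u, g w) \in H)) ->
  C N H -> C N E.
Proof.
move=> iso ginj hE hC.
have eH : H = relabel (perm ginj) E.
  apply/setP => -[a b].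
  rewrite -(permKV (perm ginj) a) -(permKV (perm ginj) b).
  set a' := ((perm ginj)^-1 a)%g; set b' := ((perm ginj)^-1 b)%g.
  by rewrite (@mem_relabel N (perm ginj) E a' b') hE !permE.
by rewrite eH iso in hC.
Qed.

Definition dec (s : seq bool) : nat * nat * nat * nat :=
  match excluded_middle_informative (exists t, enc t = s) with
  | left h => proj1_sig (constructive_indefinite_description _ h)
  | right _ => (0, 0, 0, 0)
  end.

Lemma decK t : dec (enc t) = t.
Proof.
rewrite /dec; case: excluded_middle_informative => [h|[]]; last by exists t.
by case: (constructive_indefinite_description _ h) => t' /= /enc_inj.
Qed.

Lemma soundness (C : gclass) k N (E : edges N) id (P : proofT N) :
  class_of_connected C -> iso_closed C -> good_graph E -> valid_ids k id ->
  (forall v, GP C E id P v) -> C N E.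
Proof.
move=> cc iso /and3P [hN gE cE] vid hGP.
pose tv v := dec (P v).
pose gi v := (tv v).1.1.1. pose gn v := (tv v).1.1.2.
pose gl v := (tv v).1.2. pose gr v := (tv v).2.
have loc v w : (v, w) \in E -> (gi w, gn w, gr w) = (gi v, gn v, gr v).
  move=> hvw; have [i [n [l [r [h1 [_ [_ [_ [h5 _]]]]]]]]] := hGP v.
  have [l' [hw _]] := h5 _ hvw.
  by rewrite /gi /gn /gr /tv hw h1 !decK.
pose v0 : 'I_N := Ordinal hN.
have glob w : (gi w, gn w, gr w) = (gi v0, gn v0, gr v0).
  have hc : connect (fun x y => (x, y) \in E) v0 w.
    by move: cE => /forallP /(_ v0) /forallP /(_ w).
  have hcl : closed (fun x y => (x, y) \in E)
      [pred z | (gi z, gn z, gr z) == (gi v0, gn v0, gr v0)].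
    by move=> a b /loc; rewrite !inE => ->.
  have := closed_connect hcl hc.
  by rewrite !inE eqxx => /esym /eqP.
set i := gi v0; set n := gn v0; set r := gr v0.
have ex u : P u = enc (i, n, gl u, r) /\ C n (rep C n i) /\ gl u < n /\
    (gl u = 0 -> id u = r) /\
    (forall w, (u, w) \in E -> exists l', P w = enc (i, n, l', r) /\ hedge (rep C n i) (gl u) l') /\
    (forall w w' l', (u, w) \in E -> (u, w') \in E -> P w = enc (i, n, l', r) ->
        P w' = enc (i, n, l', r) -> w = w') /\
    (forall m, hedge (rep C n i) (gl u) m -> exists w, (u, w) \in E /\ P w = enc (i, n, m, r)).
  have [i' [n' [l' [r' [h1 rest]]]]] := hGP u.
  have e : tv u = (i', n', l', r') by rewrite /tv h1 decK.
  have := glob u; rewrite -/i -/n -/r /gi /gn /gr e /= => -[<- <- <-].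
  have -> : gl u = l' by rewrite /gl e.
  by split.
have hC : C n (rep C n i) by have [_ [h _]] := ex v0.
have /and3P [_ gH cH] := cc _ _ hC.
have gl_eq w l' : P w = enc (i, n, l', r) -> gl w = l'.
  by have [h _] := ex w; rewrite h => /enc_inj [].
have [g [ginj eNn hg]] : exists g : 'I_N -> 'I_n, [/\ injective g, N = n &
     forall u w, ((u, w) \in E) = ((g u, g w) \in rep C n i)].
  apply: (@cover N n E (rep C n i) gl id r) => //.
  - exact: (id_inj vid).
  - by move=> u; have [_ [_ [h _]]] := ex u.
  - by move=> u; have [_ [_ [_ [h _]]]] := ex u.
  - move=> u w hw; have [_ [_ [_ [_ [h _]]]]] := ex u.
    by have [l' [/gl_eq -> hh]] := h w hw.
  - move=> u w w' hw hw' e; have [_ [_ [_ [_ [_ [h _]]]]]] := ex u.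
    apply: (h w w' (gl w) hw hw'); first by have [h' _] := ex w.
    by rewrite e; have [h' _] := ex w'.
  - move=> u m hm; have [_ [_ [_ [_ [_ [_ h]]]]]] := ex u.
    by have [w [hw /gl_eq hm']] := h m hm; exists w.
move: (rep C n i) hC g ginj hg; rewrite -eNn => H hC g ginj hg.
exact: (iso_transfer iso ginj hg hC).
Qed.

Lemma size_prover (C : gclass) k N (E : edges N) id v :
  C N E -> valid_ids k id ->
  size (@prover C N E id v) <=
    up_log 2 (num_iso_classes C N) + (2 * k + 7) * up_log 2 N + (2 * k + 7).
Proof.
move=> hC vid.
have [s [_ hP]] := prover_spec id hC.
rewrite hP size_enc.
set u := up_log 2 N.
have hNu : N <= 2 ^ u by apply: up_logP.
have b1 : blen N <= u.+1 by apply: blen_le; rewrite expnS; lia.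
have b2 : blen (s v) <= u by apply: blen_le; apply: leq_trans hNu; exact: ltn_ord.
have hr : rootof id s <= N ^ k.
  rewrite /rootof; case: pickP => // w _.
  by move: vid => /andP [_ /forallP /(_ w) /andP [_ ->]].
have b3 : blen (rootof id s) <= k * u + 1.
  apply: blen_le.
  have -> : 2 ^ (k * u + 1) = 2 * (2 ^ u) ^ k.
    by rewrite addn1 expnS -expnM (mulnC u k).
  have : N ^ k <= (2 ^ u) ^ k by case: (posnP k) => [->|kp]; rewrite ?expn0 // leq_exp2r.
  have : 0 < (2 ^ u) ^ k by rewrite !expn_gt0.
  lia.
have b4 : blen (idx C E) <= up_log 2 (num_iso_classes C N).
  by apply: leq_up_log; apply: idx_lt.
have -> : (2 * k + 7) * u = 2 * (k * u) + 7 * u by rewrite mulnDl -mulnA.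
lia.
Qed.

Lemma PLS (C : gclass) k : iso_closed C -> class_of_connected C ->
  is_PLS k C (@prover C) (@verif C).
Proof.
move=> iso cc; split.
- exact: verif_local.
- by move=> n E id hC vid v; exact: (completeness iso hC vid v).
move=> n E id gE vid nC P.
case: (boolP [forall v, @verif C n E id P v]) => [/forallP hall|/forallPn [v hv]].
  exfalso; move/negP: nC; apply; apply: (soundness (id := id) (P := P) cc iso gE vid).
  move=> v; apply: (VP_GP vid); move: (hall v); rewrite /verif.
  by case: excluded_middle_informative.
by exists v.
Qed.

Unset Implicit Arguments.

Theorem theorem3p1 (C : gclass) (k : nat) :
  0 < k -> iso_closed C -> class_of_connected C ->
  (exists c : nat, local_complexity_le k C
     (fun n => up_log 2 (num_iso_classes C n) + c * up_log 2 n + c)) /\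
  (tiny C -> exists c : nat, local_complexity_le k C (fun n => c * n + c)).
Proof.
move=> hk iso cc; split.
  exists (2 * k + 7), (@prover C), (@verif C); split; first exact: PLS.
  by move=> n E id hC vid v; apply: size_prover.
move=> [c0 hc0].
exists (up_log 2 c0 + (2 * k + 7)), (@prover C), (@verif C); split; first exact: PLS.
move=> n E id hC vid v; apply: leq_trans (size_prover v hC vid) _.
have hn : 0 < n by have /and3P [] := cc _ _ hC.
have h1 : up_log 2 (num_iso_classes C n) <= n * up_log 2 c0.
  apply: up_log_min => //; apply: leq_trans (hc0 n hn) _.
  rewrite mulnC expnM leq_exp2r //; exact: up_logP.
have h2 : up_log 2 n <= n by apply: up_log_min => //; apply: ltnW; apply: ltn_expl.
have h3 : (2 * k + 7) * up_log 2 n <= (2 * k + 7) * n by apply: leq_mul.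
rewrite mulnDl; lia.
Qed.
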